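(* Let $T=\{t_1,\ldots,t_N\}$ be documents, each containing at most $L$ distinct words from a dictionary $\{w_1,\ldots,w_D\}$ ($D\ge2$). For a word $w$ let $\#(w)$ be the number of documents containing $w$. Fix $\epsilon\in(0,1]$ and $p=2\log D$. Consider the mapper that, for every document $t$ and every unordered pair of distinct words $(w_1,w_2)$ in $t$, independently emits $((w_1,w_2)\to1)$ with probability $\min\!\left(1,\frac{p}{\epsilon}\frac{2}{\#(w_1)+\#(w_2)}\right)$ (DiceSampleEmit). Then the expected total number of emitted pairs (shuffle size) is $O(DL\log(D)/\epsilon)$, independently of $N$.
   Context: This sampling scheme is used to estimate the Dice similarity $\frac{2\#(x,y)}{\#(x)+\#(y)}$, where $\#(x,y)$ is the number of documents containing both $x$ and $y$. $\log$ denotes the natural logarithm. *)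

(* Defs.v *)
From HB Require Import structures.
From mathcomp Require Import all_boot all_order all_algebra.
From mathcomp Require Import reals exp.
Set Implicit Arguments. Unset Strict Implicit. Unset Printing Implicit Defensive.
Import Order.TTheory GRing.Theory Num.Theory.
Local Open Scope ring_scope.

(* Dictionary = 'I_D (words w_1..w_D); corpus = N documents T : 'I_N -> {set 'I_D},
   each document being its set of distinct words. *)

Definition doc_count (D N : nat) (T : 'I_N -> {set 'I_D}) (w : 'I_D) : nat :=
  #|[set i | w \in T i]|.

Definition dice_emit_prob (R : realType) (D N : nat) (T : 'I_N -> {set 'I_D})
    (eps : R) (w1 w2 : 'I_D) : R :=
  Num.min 1 ((2 * ln (D%:R)) / eps *
             (2 / (doc_count T w1 + doc_count T w2)%:R)).

(* Expected shuffle size: expected number of emitted pairs = (by linearity of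
   expectation) the sum, over documents t and unordered pairs of distinct words
   {w1,w2} of t (enumerated as w1 < w2), of the emission probabilities. *)
Definition dice_expected_shuffle (R : realType) (D N : nat) (T : 'I_N -> {set 'I_D})
    (eps : R) : R :=
  \sum_(i < N) \sum_(w1 in T i) \sum_(w2 in T i | (w1 < w2)%N)
     dice_emit_prob T eps w1 w2.

(* Main.v *)
Require Import Defs.
From HB Require Import structures.
From mathcomp Require Import all_boot all_order all_algebra.
From mathcomp Require Import reals exp.
From mathcomp Require Import ring.
Import Order.TTheory GRing.Theory Num.Theory.
Local Open Scope ring_scope.

Lemma doc_count_gt0 (D N : nat) (T : 'I_N -> {set 'I_D}) i w :
  w \in T i -> (0 < doc_count T w)%N.
Proof.
move=> h; rewrite /doc_count; apply/card_gt0P; exists i; by rewrite inE.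
Qed.

Lemma emit_le (R : realType) (D N : nat) (T : 'I_N -> {set 'I_D}) (eps : R) i w1 w2 :
  (2 <= D)%N -> 0 < eps -> w1 \in T i ->
  dice_emit_prob T eps w1 w2 <= (2 * ln (D%:R)) / eps * (2 / (doc_count T w1)%:R).
Proof.
move=> hD he h; rewrite /dice_emit_prob.
have ha : 0 <= (2 * ln (D%:R)) / eps.
  apply: divr_ge0; last exact: ltW.
  apply: mulr_ge0 => //; apply: ln_ge0; rewrite (ler_nat R 1 D); exact: ltnW.
rewrite ge_min; apply/orP; right.
apply: ler_wpM2l => //; apply: ler_wpM2l => //.
have c0 := @doc_count_gt0 _ _ _ i _ h.
rewrite lef_pV2 ?posrE ?ltr0n ?addn_gt0 ?c0 // ler_nat; exact: leq_addr.
Qed.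

Theorem theorem9 (R : realType) :
  exists C : R, 0 < C /\
    forall (D L N : nat) (T : 'I_N -> {set 'I_D}) (eps : R),
      (2 <= D)%N ->
      (forall i, (#|T i| <= L)%N) ->
      0 < eps -> eps <= 1 ->
      dice_expected_shuffle T eps <= C * D%:R * L%:R * ln (D%:R) / eps.
Proof.
exists 4; split => // D L N T eps hD hL he _.
set a := (2 * ln (D%:R)) / eps.
have ha : 0 <= a.
  apply: divr_ge0; last exact: ltW.
  apply: mulr_ge0 => //; apply: ln_ge0; rewrite (ler_nat R 1 D); exact: ltnW.
set f := fun w : 'I_D => a * (2 / (doc_count T w)%:R).
have hf : forall w, 0 <= f w.
  move=> w; apply: mulr_ge0 => //; apply: divr_ge0 => //.
rewrite /dice_expected_shuffle.
apply: (@le_trans _ _ (\sum_(i < N) \sum_(w1 in T i) f w1 *+ L)).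
  apply: ler_sum => i _; apply: ler_sum => w1 hw1.
  apply: (@le_trans _ _ (\sum_(w2 in T i) f w1)); last first.
    rewrite sumr_const; exact: ler_wpMn2l.
  rewrite big_mkcondr /=.
  apply: ler_sum => w2 _.
  case: ifP => _.
  rewrite /f /a; exact: (emit_le _ _ _ _ _ _ _ w2 hD he hw1).
  done.
have E : \sum_(i < N) \sum_(w1 in T i) f w1 *+ L =
         \sum_(w : 'I_D) \sum_(i < N | w \in T i) f w *+ L.
  rewrite (exchange_big_dep (fun _ => true)) //=.
rewrite E.
apply: (@le_trans _ _ (\sum_(w : 'I_D) 2 * a * L%:R)).
  apply: ler_sum => w _.
  rewrite sumr_const.
  have -> : #|[pred i : 'I_N | w \in T i]| = doc_count T w.
    by rewrite /doc_count; apply: eq_card => i; rewrite inE.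
  rewrite /f.
  case: (posnP (doc_count T w)) => [->|c0].
    rewrite mulr0n.
    by apply: mulr_ge0 => //; apply: mulr_ge0.
  have cn : (doc_count T w)%:R != 0 :> R by rewrite pnatr_eq0 -lt0n.
  rewrite -mulrnA mulnC mulrnA.
  rewrite -[X in X *+ L]mulr_natr -(mulrA a) divfK // [a * 2]mulrC.
  by rewrite mulr_natr.
rewrite sumr_const card_ord /a -mulr_natr.
rewrite le_eqVlt; apply/orP; left; apply/eqP.
rewrite (_ : 4 = 2 * 2 :> R); last by rewrite -natrM.
ring.
Qed.
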